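(* Let $H$ be an oriented graph on $h$ vertices that is not $2$-colorable. Then the graph $K(H)$ contains a cycle $c_1c_2\dots c_\ell c_1$ of length $\ell\ge3$ with the following property: for any labeling of the vertices of $H$ by $1,\dots,h$ with corresponding backedge graph $G$, and for every order-preserving homomorphism $f:G\to K(H)$, there are vertices $u_1\in f^{-1}(c_1),\dots,u_\ell\in f^{-1}(c_\ell)$ such that $u_1u_2\dots u_\ell u_1$ is a cycle in $G$.
   Context: An oriented graph is $2$-colorable if its vertex set can be partitioned into $2$ sets each inducing an acyclic digraph. Graphs are undirected with vertex sets that are subsets of $\mathbb{N}$; subgraphs inherit labels. Given a labeling of $V(H)$ by $1,\dots,h$, the backedge graph of $H$ is the undirected graph on $[h]$ with $\{i,j\}$ an edge iff $i<j$ and $j\to i$ in $H$. An order-preserving homomorphism from $G$ to $G'$ is a map $f:V(G)\to V(G')$ with $f(i)\le f(j)$ whenever $i\le j$ and mapping edges to edges; an order-preserving isomorphism is one that is also a graph isomorphism. The ordered core of $G$ is a subgraph of $G$ with the fewest vertices among subgraphs to which $G$ has an order-preserving homomorphism. Let $\mathcal{C}(H)$ be the set of ordered cores of the backedge graphs of $H$ over all $h!$ labelings of $V(H)$ by $1,\dots,h$. $K(H)$ denotes a fixed element of $\mathcal{C}(H)$ such that for every $C\in\mathcal{C}(H)$, if there is an order-preserving homomorphism from $C$ to $K(H)$ then there is an order-preserving isomorphism between $C$ and $K(H)$. *)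

(* Defs.v *)
From mathcomp Require Import all_boot fingroup perm.
Set Implicit Arguments. Unset Strict Implicit. Unset Printing Implicit Defensive.

(* An oriented graph H on vertex set 'I_h, given by its arc relation:
   no loops and no pair of opposite arcs. *)
Definition oriented (h : nat) (arc : rel 'I_h) : Prop :=
  forall x y : 'I_h, arc x y -> ~~ arc y x.

Definition acyclic_on (h : nat) (arc : rel 'I_h) (S : {set 'I_h}) : Prop :=
  forall s : seq 'I_h, s != [::] -> uniq s -> all (mem S) s -> ~~ path.cycle arc s.

Definition two_colorable (h : nat) (arc : rel 'I_h) : Prop :=
  exists A : {set 'I_h}, acyclic_on arc A /\ acyclic_on arc (~: A).

(* (Undirected) graphs whose vertex sets are subsets of the label set
   [h] = 'I_h (ordered by the natural order). *)
Record ograph (h : nat) := OGraph { overt : {set 'I_h}; oedge : rel 'I_h }.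

Definition is_graph (h : nat) (G : ograph h) : Prop :=
  [/\ forall x y, oedge G x y -> oedge G y x,
      forall x, ~~ oedge G x x &
      forall x y, oedge G x y -> (x \in overt G) && (y \in overt G)].

Definition is_subgraph (h : nat) (C G : ograph h) : Prop :=
  [/\ is_graph C, overt C \subset overt G &
      forall x y, oedge C x y -> oedge G x y].

Definition ohom (h : nat) (G G' : ograph h) (f : 'I_h -> 'I_h) : Prop :=
  [/\ forall x, x \in overt G -> f x \in overt G',
      forall x y, x \in overt G -> y \in overt G -> x <= y -> f x <= f y &
      forall x y, x \in overt G -> y \in overt G ->
        oedge G x y -> oedge G' (f x) (f y)].

Definition ohom_exists (h : nat) (G G' : ograph h) : Prop :=
  exists f, ohom G G' f.

Definition oiso (h : nat) (G G' : ograph h) : Prop :=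
  exists f, [/\ ohom G G' f, {in overt G &, injective f},
                f @: overt G = overt G' &
                forall x y, x \in overt G -> y \in overt G ->
                  oedge G' (f x) (f y) -> oedge G x y].

Definition is_ordered_core (h : nat) (C G : ograph h) : Prop :=
  [/\ is_subgraph C G, ohom_exists G C &
      forall C', is_subgraph C' G -> ohom_exists G C' ->
        #|overt C| <= #|overt C'|].

(* Backedge graph for the labeling p (vertex v of H gets label p v):
   {i,j} is an edge iff i < j and (vertex labelled j) -> (vertex labelled i). *)
Definition backedge_graph (h : nat) (arc : rel 'I_h) (p : {perm 'I_h}) : ograph h :=
  OGraph [set: 'I_h]
    (fun i j => [exists u, exists v, (p u == i) && (p v == j) &&
       (((i < j) && arc v u) || ((j < i) && arc u v))]).

Definition in_cores (h : nat) (arc : rel 'I_h) (C : ograph h) : Prop :=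
  exists p : {perm 'I_h}, is_ordered_core C (backedge_graph arc p).

(* Main.v *)
Require Import Defs.
From mathcomp Require Import all_boot fingroup perm.
From mathcomp Require Import zify.
From Stdlib Require Import Classical.
Set Implicit Arguments. Unset Strict Implicit. Unset Printing Implicit Defensive.

Lemma rank_img h (S T : {set 'I_h}) (F : 'I_h -> 'I_h) :
  {in S &, injective F} -> {in S &, forall x y : 'I_h, x <= y -> F x <= F y} ->
  F @: S = T -> forall x, x \in S ->
  #|[set k in T | k < F x]| = #|[set y in S | y < x]|.
Proof.
move=> Finj Fmon FST x xS.
have -> : [set k in T | k < F x] = F @: [set y in S | y < x].
  apply/setP => k; rewrite inE; apply/andP/imsetP.
  - rewrite -FST => -[/imsetP[y yS ->] lt]; exists y => //; rewrite inE yS /=.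
    rewrite ltnNge; apply/negP => le; move: (Fmon _ _ xS yS le).
    by rewrite leqNgt lt.
  - move=> [y]; rewrite inE => /andP[yS ltyx] ->; split.
    + by rewrite -FST; apply/imsetP; exists y.
    + rewrite ltn_neqAle Fmon ?(ltnW ltyx) // andbT.
      apply/negP => /eqP/ord_inj Heq; have E := Finj _ _ yS xS Heq.
      by rewrite E ltnn in ltyx.
apply: card_in_imset => a b; rewrite !inE => /andP[aS _] /andP[bS _]; exact: Finj.
Qed.

Lemma mono_eq h (S T : {set 'I_h}) (F G : 'I_h -> 'I_h) :
  {in S &, injective F} -> {in S &, forall x y : 'I_h, x <= y -> F x <= F y} -> F @: S = T ->
  {in S &, injective G} -> {in S &, forall x y : 'I_h, x <= y -> G x <= G y} -> G @: S = T ->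
  {in S, F =1 G}.
Proof.
move=> Fi Fm FT Gi Gm GT x xS.
have RF := rank_img Fi Fm FT xS. have RG := rank_img Gi Gm GT xS.
have key : forall a b : 'I_h, a \in T -> a < b ->
    #|[set k in T | k < a]| < #|[set k in T | k < b]|.
  move=> a b aT ab; apply: proper_card; rewrite properE; apply/andP; split.
  - apply/subsetP => k; rewrite !inE => /andP[-> ka] /=; exact: ltn_trans ka ab.
  - apply/subsetPn; exists a; by rewrite !inE ?aT ?ab ?ltnn ?andbF.
have FxT : F x \in T by rewrite -FT; apply/imsetP; exists x.
have GxT : G x \in T by rewrite -GT; apply/imsetP; exists x.
apply: ord_inj; apply/eqP; rewrite eqn_leq; apply/andP; split; rewrite leqNgt; apply/negP => lt.
- by have := key _ _ GxT lt; rewrite RF RG ltnn.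
- by have := key _ _ FxT lt; rewrite RF RG ltnn.
Qed.

Definition inv_on h (S : {set 'I_h}) (g : 'I_h -> 'I_h) (k : 'I_h) : 'I_h :=
  odflt k [pick x in S | g x == k].

Lemma inv_onP h (S : {set 'I_h}) g k :
  k \in g @: S -> inv_on S g k \in S /\ g (inv_on S g k) = k.
Proof.
move=> /imsetP[x xS ->]; rewrite /inv_on.
case: pickP => [y /andP[yS /eqP ->]|] //=.
by move=> /(_ x); rewrite xS eqxx.
Qed.

Lemma inv_on_mono h (S : {set 'I_h}) (g : 'I_h -> 'I_h) a b :
  {in S &, forall x y : 'I_h, x <= y -> g x <= g y} ->
  a \in g @: S -> b \in g @: S -> a <= b -> inv_on S g a <= inv_on S g b.
Proof.
move=> gm aS bS ab; have [a1 a2] := inv_onP aS; have [b1 b2] := inv_onP bS.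
rewrite leqNgt; apply/negP => lt; have := gm _ _ b1 a1 (ltnW lt).
rewrite a2 b2 => ba.
have eab : a = b by apply: ord_inj; apply/eqP; rewrite eqn_leq ab ba.
by move: lt; rewrite eab ltnn.
Qed.

Lemma acyc_lemma h (arc : rel 'I_h) (p : {perm 'I_h}) (S : {set 'I_h}) :
  oriented arc ->
  (forall u v, u \in S -> v \in S -> p v < p u -> arc u v -> False) ->
  acyclic_on arc S.
Proof.
move=> Hor Hback s sn0 us As; apply/negP => Hc.
have Hsub : {in mem S &, subrel arc (fun u v => p u < p v)}.
  move=> u v uS vS a.
  have uv : u != v by apply/eqP => E; subst; move: (Hor _ _ a); rewrite a.
  rewrite ltnNge leq_eqVlt negb_or; apply/andP; split.
  - apply/negP => /eqP/ord_inj/perm_inj E; by rewrite E eqxx in uv.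
  - apply/negP => lt; exact: Hback _ _ uS vS lt a.
have := sub_in_cycle Hsub As Hc.
case: s sn0 us As Hc => [//|x s'] _ _ _ _ /=.
move=> /(order_path_min (fun a b c => @ltn_trans (p a) (p b) (p c))).
by rewrite all_rcons ltnn.
Qed.

Lemma size_le_card h (V : {set 'I_h}) (s : seq 'I_h) :
  uniq s -> all (mem V) s -> size s <= #|V|.
Proof.
move=> us As; rewrite -(card_uniqP us); apply: subset_leq_card.
apply/subsetP => z zs; exact: (allP As z zs).
Qed.

Lemma step h (e : rel 'I_h) (V : {set 'I_h}) :
  (forall x, ~~ e x x) -> (forall x y, e x y -> e y x) ->
  (forall v, v \in V -> exists y z, [/\ y \in V, z \in V, e v y, e v z & y != z]) ->
  forall x y s, uniq (x :: y :: s) -> all (mem V) (x :: y :: s) -> path e x (y :: s) ->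
  (exists c, [/\ 3 <= size c, uniq c, all (mem V) c & path.cycle e c]) \/
  (exists z, [/\ z \in V, z \notin x :: y :: s & e z x]).
Proof.
move=> irr sym deg2 x y s U A P.
have xV : x \in V by move: A => /= /andP[].
have [a [b [aV bV xa xb ab]]] := deg2 x xV.
have [z [zV xz zy]] : exists z, [/\ z \in V, e x z & z != y].
  case: (eqVneq a y) => [ay|ay]; last by exists a.
  by exists b; split=> //; rewrite -ay eq_sym.
case zin: (z \in x :: y :: s); last by right; exists z; rewrite zin sym.
left.
have zx : z != x by apply/eqP => E; move: xz; rewrite E (negbTE (irr x)).
have zs : z \in s by move: zin; rewrite !inE (negbTE zx) (negbTE zy).
pose i := index z s.
have E : x :: y :: take i.+1 s = take i.+3 (x :: y :: s) by [].
exists (x :: y :: take i.+1 s); split.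
- by rewrite /= size_takel // index_mem.
- by rewrite E take_uniq.
- apply/allP => w; rewrite E => /mem_take wc; exact: (allP A w wc).
- rewrite /path.cycle rcons_path; apply/andP; split.
  + move: P; rewrite -{1}(cat_take_drop i.+1 s) -cat_cons cat_path.
    by move=> /andP[].
  + rewrite (take_nth z) ?index_mem // nth_index // -rcons_cons last_rcons.
    exact: sym.
Qed.

Lemma long_path h (e : rel 'I_h) (V : {set 'I_h}) :
  (forall x, ~~ e x x) -> (forall x y, e x y -> e y x) ->
  (forall v, v \in V -> exists y z, [/\ y \in V, z \in V, e v y, e v z & y != z]) ->
  forall n x y s, #|V| - size (x :: y :: s) <= n ->
  uniq (x :: y :: s) -> all (mem V) (x :: y :: s) -> path e x (y :: s) ->
  exists c, [/\ 3 <= size c, uniq c, all (mem V) c & path.cycle e c].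
Proof.
move=> irr sym deg2; elim=> [|n IH] x y s Hn U A P;
  (case: (step irr sym deg2 U A P) => [//|[z [zV zn ezx]]]).
- exfalso.
  have H : size (z :: x :: y :: s) <= #|V|.
    apply: size_le_card; first by rewrite cons_uniq zn U.
    by rewrite /= zV; move: A => /= ->.
  move: Hn H => /=; lia.
- apply: (IH z x (y :: s)).
  + move: Hn => /=; lia.
  + by rewrite cons_uniq zn U.
  + by rewrite /= zV; move: A => /= ->.
  + by apply/andP; split.
Qed.

Lemma forest_col h (e : rel 'I_h) :
  (forall x, ~~ e x x) -> (forall x y, e x y -> e y x) ->
  forall n (V : {set 'I_h}), #|V| <= n ->
  (forall c, 3 <= size c -> uniq c -> all (mem V) c -> ~~ path.cycle e c) ->
  exists col : 'I_h -> bool,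
    forall x y, x \in V -> y \in V -> e x y -> col x != col y.
Proof.
move=> irr sym; elim=> [|n IH] V Vn Hnc.
  exists (fun _ => true) => x y xV.
  by move: Vn; rewrite leqn0 => /eqP /cards0_eq V0; rewrite V0 inE in xV.
case: (set_0Vmem V) => [V0|[v0 v0V]].
  by exists (fun _ => true) => x y; rewrite V0 inE.
case: (boolP [exists v in V, [forall y in V, forall z in V,
                 (e v y && e v z) ==> (y == z)]]).
- move=> /exists_inP [v vV /forall_inP Hv].
  have [col Hcol] : exists col : 'I_h -> bool,
      forall x y, x \in V :\ v -> y \in V :\ v -> e x y -> col x != col y.
    apply: IH.
    + by move: Vn; rewrite (cardsD1 v V) vV add1n ltnS.
    + move=> c c3 uc Ac; apply: Hnc => //; apply/allP => w /(allP Ac).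
      by rewrite !inE => /andP[_ ->].
  pose col' := fun x => if x == v then
      (if [pick y in V :\ v | e v y] is Some w then ~~ col w else true)
    else col x.
  have nb : forall y, y \in V -> y != v -> e v y ->
      (if [pick y in V :\ v | e v y] is Some w then ~~ col w else true) = ~~ col y.
    move=> y yV yv evy; case: pickP => [w /andP[wV evw]|].
    + have wV' : w \in V by move: wV; rewrite in_setD1 => /andP[].
      move: (Hv _ wV') => /forall_inP /(_ _ yV); rewrite evw evy /= => /eqP ->.
      by [].
    + by move=> /(_ y); rewrite in_setD1 yv yV evy.
  exists col' => x y xV yV exy; rewrite /col'.
  case: (eqVneq x v) => [xv|xv]; case: (eqVneq y v) => [yv|yv].
  + by subst; rewrite (negbTE (irr _)) in exy.
  + subst x; rewrite (nb y) //; by case: (col y).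
  + subst y; rewrite (nb x) //; last exact: sym; by case: (col x).
  + by apply: Hcol; rewrite ?in_setD1 ?xv ?yv.
- rewrite negb_exists_in => /forall_inP Hall; exfalso.
  have deg2 : forall v, v \in V ->
      exists y z, [/\ y \in V, z \in V, e v y, e v z & y != z].
    move=> v vV; move: (Hall v vV).
    rewrite negb_forall_in => /exists_inP [y yV].
    rewrite negb_forall_in => /exists_inP [z zV].
    rewrite negb_imply => /andP[/andP[ey ez] yz]; by exists y, z.
  have [y [z [yV _ ey _ _]]] := deg2 v0 v0V.
  have vy : v0 != y by apply/eqP => E; move: ey; rewrite E (negbTE (irr y)).
  case: (long_path irr sym deg2 (n := #|V|) (x := v0) (y := y) (s := [::])).
  + exact: leq_subr.
  + by rewrite /= inE vy.
  + by rewrite /= v0V yV.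
  + by rewrite /= ey.
  + move=> c [c3 uc Ac cc]; move: (Hnc c c3 uc Ac); by rewrite cc.
Qed.

Lemma backedge_is_graph h (arc : rel 'I_h) (p : {perm 'I_h}) :
  is_graph (backedge_graph arc p).
Proof.
split.
- move=> x y /existsP[u /existsP[v /andP[/andP[pu pv] H]]].
  apply/existsP; exists v; apply/existsP; exists u.
  by rewrite pv pu /= orbC.
- move=> x; apply/negP => /existsP[u /existsP[v /andP[_ ]]].
  by rewrite ltnn.
- by move=> x y _; rewrite !inE.
Qed.

Lemma min_exists h (Q : ograph h -> Prop) : forall n C, Q C -> #|overt C| <= n ->
  exists C0, Q C0 /\ forall C', Q C' -> #|overt C0| <= #|overt C'|.
Proof.
elim=> [|n IH] C QC Cn.
- exists C; split=> // C' _. by move: Cn; rewrite leqn0 => /eqP ->.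
- case: (classic (exists C', Q C' /\ #|overt C'| < #|overt C|)) => [[C' [QC' lt]]|Hno].
  + apply: (IH C') => //. by rewrite -ltnS (leq_trans lt Cn).
  + exists C; split=> // C' QC'. rewrite leqNgt; apply/negP => lt; apply: Hno; by exists C'.
Qed.

Lemma lift_lemma h (arc : rel 'I_h) (K : ograph h) (p : {perm 'I_h}) (f : 'I_h -> 'I_h) :
  (forall C : ograph h, in_cores arc C -> ohom_exists C K -> oiso C K) ->
  ohom (backedge_graph arc p) K f ->
  exists g : 'I_h -> 'I_h, forall k, k \in overt K -> f (g k) = k /\
     (forall k', k' \in overt K -> oedge K k k' ->
        oedge (backedge_graph arc p) (g k) (g k')).
Proof.
move=> Hmin [Hf1 Hf2 Hf3].
set G := backedge_graph arc p.
have HG : is_graph G := backedge_is_graph arc p.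
have inG : forall x, x \in overt G by move=> x; rewrite inE.
have [C [[HsubC HhomC] HminC]] := @min_exists h
  (fun C => is_subgraph C G /\ ohom_exists G C) #|overt G| G
  (conj (And3 HG (subxx _) (fun x y e => e))
        (ex_intro _ id (And3 (fun x xG => xG) (fun x y _ _ l => l) (fun x y _ _ e => e))))
  (leqnn _).
have [[Csym Cirr CV] _ HeC] := HsubC.
have Hcin : in_cores arc C.
  exists p; split=> // C' H1 H2; exact: HminC.
have HCK : ohom_exists C K.
  exists f; split.
  - move=> x _; exact: Hf1.
  - move=> x y _ _; exact: Hf2.
  - move=> x y _ _ exy; apply: Hf3 => //; exact: HeC.
have [psi [[psiV psimon psiE] psiinj psiimg psirefl]] := Hmin C Hcin HCK.
set S := overt C.
have [g0 [g0V g0mon g0E]] := HhomC.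
set W := inv_on S psi @: (f @: S).
pose C' := OGraph W (fun x y => [&& oedge C x y, x \in W & y \in W]).
have fKi : forall x, f x \in psi @: S by move=> x; rewrite psiimg; exact: Hf1.
have HsubC' : is_subgraph C' G.
  split.
  - split.
    + by move=> x y /and3P[exy xW yW]; rewrite /= (Csym _ _ exy) xW yW.
    + by move=> x; rewrite /= (negbTE (Cirr x)).
    + by move=> x y /and3P[_ -> ->].
  - by apply/subsetP => x _; rewrite inG.
  - by move=> x y /and3P[exy _ _]; exact: HeC.
have HhomC' : ohom_exists G C'.
  exists (fun x => inv_on S psi (f (g0 x))); split.
  - move=> x xG; apply: imset_f; apply: imset_f; exact: g0V.
  - move=> x y xG yG xy; apply: inv_on_mono => //.
    apply: Hf2 => //; exact: g0mon.
  - move=> x y xG yG exy.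
    have [a1 a2] := inv_onP (fKi (g0 x)).
    have [b1 b2] := inv_onP (fKi (g0 y)).
    rewrite /= !imset_f ?g0V // !andbT.
    apply: psirefl => //; rewrite a2 b2; apply: Hf3 => //.
    apply: HeC; exact: g0E.
have c1 := HminC C' (conj HsubC' HhomC').
have c2 : #|W| <= #|f @: S| := leq_imset_card _ _.
have c3 : #|f @: S| <= #|S| := leq_imset_card _ _.
have finj : {in S &, injective f}.
  apply/imset_injP; rewrite eqn_leq c3 /=; exact: leq_trans c1 c2.
have fimg : f @: S = overt K.
  apply/eqP; rewrite eqEcard; apply/andP; split.
  - apply/subsetP => k /imsetP[x _ ->]; exact: Hf1.
  - by rewrite -psiimg (card_in_imset psiinj) (card_in_imset finj).
have feq : {in S, f =1 psi}.
  apply: (mono_eq finj _ fimg psiinj psimon psiimg).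
  move=> x y _ _; exact: Hf2.
exists (inv_on S psi) => k kK.
have kI : k \in psi @: S by rewrite psiimg.
have [k1 k2] := inv_onP kI.
split; first by rewrite feq.
move=> k' k'K ekk'.
have k'I : k' \in psi @: S by rewrite psiimg.
have [k'1 k'2] := inv_onP k'I.
apply: HeC; apply: psirefl => //; by rewrite k2 k'2.
Qed.

Theorem corollary4p7 (h : nat) (arc : rel 'I_h) :
  oriented arc -> ~ two_colorable arc ->
  forall K : ograph h, in_cores arc K ->
  (forall C : ograph h, in_cores arc C -> ohom_exists C K -> oiso C K) ->
  exists c : seq 'I_h,
    [/\ 3 <= size c, uniq c, all (mem (overt K)) c & path.cycle (oedge K) c] /\
    forall (p : {perm 'I_h}) (f : 'I_h -> 'I_h),
      ohom (backedge_graph arc p) K f ->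
      exists u : seq 'I_h,
        [/\ size u = size c, map f u = c, uniq u &
            path.cycle (oedge (backedge_graph arc p)) u].
Proof.
move=> Hor Hn2 K [p0 [[[Ksym Kirr KV] HsubK HeK] [f0 [Hf01 Hf02 Hf03]] Hmin0]] Hmin.
case: (classic (exists c : seq 'I_h,
    [/\ 3 <= size c, uniq c, all (mem (overt K)) c & path.cycle (oedge K) c]))
  => [[c Hc]|Hno].
- exists c; split => // p f Hf.
  have [c3 uc Ac cc] := Hc.
  have [g Hg] := lift_lemma Hmin Hf.
  have Hmap : map f (map g c) = c.
    rewrite -map_comp; apply: map_id_in => k kc /=.
    by have [-> _] := Hg k (allP Ac k kc).
  exists (map g c); split.
  + by rewrite size_map.
  + exact: Hmap.
  + by move: uc; rewrite -{1}Hmap => /map_uniq.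
  + rewrite cycle_map; apply: (sub_in_cycle _ Ac cc).
    move=> a b aK bK eab /=; have [_ H] := Hg a aK; exact: H.
- exfalso.
  have Hnc : forall c, 3 <= size c -> uniq c -> all (mem (overt K)) c ->
      ~~ path.cycle (oedge K) c.
    move=> c c3 uc Ac; apply/negP => cc; apply: Hno; by exists c.
  have [col Hcol] := forest_col Kirr Ksym (leqnn _) Hnc.
  apply: Hn2; exists [set v | col (f0 (p0 v))].
  have Hedge : forall u v, p0 v < p0 u -> arc u v ->
      col (f0 (p0 v)) != col (f0 (p0 u)).
    move=> u v lt a; apply: Hcol; rewrite ?Hf01 ?inE //.
    apply: Hf03; rewrite ?inE //.
    apply/existsP; exists v; apply/existsP; exists u.
    by rewrite !eqxx lt a.
  split; apply: (acyc_lemma (p := p0)) => // u v; rewrite !inE => uA vA lt a;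
    have := Hedge _ _ lt a.
  + by rewrite uA vA.
  + by rewrite (negbTE uA) (negbTE vA).
Qed.
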